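(* Let $d \geq 3$, $s\ge1$, and let $\pi, \sigma$ be permutations of $\{1,\dots,d\}$ such that the cycle decomposition of $\pi^{-1}\sigma$ contains a cycle of length $p$ for some $p \geq 3$. Identifying permutations with their permutation matrices, $$\{\lambda \in [0,1] : (1-\lambda) \pi + \lambda \sigma \in \mathsf U_{d,s}\} = \{\lambda \in [0,1] : (1-\lambda) \pi + \lambda \sigma \in \mathsf L_{d,s}\} = \{k/s : k = 0, \ldots, s\}.$$ In particular, this holds for every edge $[\pi,\sigma]$ of the Birkhoff polytope $\mathsf B_d$.
   Context: $\mathsf B_d$ is the set (Birkhoff polytope) of $d\times d$ bistochastic matrices. For $U\in\mathcal U(ds)$ viewed as a $d\times d$ block matrix with blocks $U_{ij}\in M_s(\mathbb C)$, $\phi_{d,s}(U)=\big(\tfrac1s\|U_{ij}\|_F^2\big)_{i,j=1}^d$ with $\|X\|_F=\operatorname{Tr}(XX^* )^{1/2}$, and $\mathsf U_{d,s}:=\phi_{d,s}(\mathcal U(ds))$. $\mathsf{Brac}_{d,s}$ is the set of pairs of probability vectors $(\alpha,\beta)$ in $\mathbb R^d$ for which there exist $A_1,\dots,A_d,B_1,\dots,B_d\in M_s(\mathbb C)$ with $\sum_i A_iA_i^*=\sum_iB_iB_i^*=I_s$, $\sum_iA_iB_i^*=0$, $\tfrac1s\|A_i\|_F^2=\alpha_i$, $\tfrac1s\|B_i\|_F^2=\beta_i$ for all $i$. $\mathsf L_{d,s}$ is the set of $B\in\mathsf B_d$ all of whose pairs of distinct rows and pairs of distinct columns belong to $\mathsf{Brac}_{d,s}$.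 *)

(* Defs.v *)
From HB Require Import structures.
From mathcomp Require Import all_boot all_order all_algebra all_fingroup.
From mathcomp Require Import complex.
From mathcomp Require Import reals.
Set Implicit Arguments. Unset Strict Implicit. Unset Printing Implicit Defensive.
Import Order.TTheory GRing.Theory Num.Theory.
Local Open Scope ring_scope.

Section Defs.
Variable R : realType.
Local Notation C := (complex R).

Definition ctrmx (m n : nat) (X : 'M[C]_(m, n)) : 'M[C]_(n, m) :=
  \matrix_(i, j) conjc (X j i).

Definition sqmod (z : C) : R := (complex.Re z) ^+ 2 + (complex.Im z) ^+ 2.

Definition frob2 (m n : nat) (X : 'M[C]_(m, n)) : R :=
  \sum_(a < m) \sum_(b < n) sqmod (X a b).

Definition unitary (n : nat) (U : 'M[C]_n) : Prop :=
  U *m ctrmx U = 1%:M /\ ctrmx U *m U = 1%:M.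

(* block (i,j) of a ds x ds matrix, of size s x s; row index (i,a) <-> i*s+a *)
Definition blk (d s : nat) (U : 'M[C]_(d * s)) (i j : 'I_d) : 'M[C]_s :=
  \matrix_(a, b) U (mxvec_index i a) (mxvec_index j b).

Definition phi (d s : nat) (U : 'M[C]_(d * s)) : 'M[R]_d :=
  \matrix_(i, j) ((s%:R)^-1 * frob2 (blk U i j)).

Definition Uset (d s : nat) (B : 'M[R]_d) : Prop :=
  exists U : 'M[C]_(d * s), unitary U /\ phi U = B.

Definition bistochastic (d : nat) (B : 'M[R]_d) : Prop :=
  (forall i j, 0 <= B i j) /\
  (forall i, \sum_j B i j = 1) /\ (forall j, \sum_i B i j = 1).

Definition probvec (d : nat) (a : 'I_d -> R) : Prop :=
  (forall i, 0 <= a i) /\ \sum_i a i = 1.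

Definition Brac (d s : nat) (alpha beta : 'I_d -> R) : Prop :=
  probvec alpha /\ probvec beta /\
  exists A Bm : 'I_d -> 'M[C]_s,
    \sum_i (A i *m ctrmx (A i)) = 1%:M /\
    \sum_i (Bm i *m ctrmx (Bm i)) = 1%:M /\
    \sum_i (A i *m ctrmx (Bm i)) = 0 /\
    (forall i, (s%:R)^-1 * frob2 (A i) = alpha i) /\
    (forall i, (s%:R)^-1 * frob2 (Bm i) = beta i).

Definition Lset (d s : nat) (B : 'M[R]_d) : Prop :=
  bistochastic B /\
  (forall i k : 'I_d, i != k -> Brac s (fun j => B i j) (fun j => B k j)) /\
  (forall j l : 'I_d, j != l -> Brac s (fun i => B i j) (fun i => B i l)).

End Defs.

(* Main.v *)
Require Import Defs.
From HB Require Import structures.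
From mathcomp Require Import all_boot all_order all_algebra all_fingroup.
From mathcomp Require Import complex reals.
From mathcomp Require Import ring lra.
Import Order.TTheory GRing.Theory Num.Theory.
Local Open Scope ring_scope.
Set Implicit Arguments. Unset Strict Implicit. Unset Printing Implicit Defensive.


Lemma sqmod_ge0 (R : realType) (z : R[i]) : 0 <= sqmod z.
Proof. by rewrite /sqmod addr_ge0 // sqr_ge0. Qed.

Lemma sqmod_eq0 (R : realType) (z : R[i]) : sqmod z = 0 -> z = 0.
Proof.
case: z => a b; rewrite /sqmod /= => /eqP.
rewrite paddr_eq0 ?sqr_ge0 // !sqrf_eq0 => /andP[/eqP-> /eqP->] //.
Qed.

Lemma mul_conjc (R : realType) (z : R[i]) : z * conjc z = real_complex R (sqmod z).
Proof.
case: z => a b; rewrite /sqmod /=; apply/eqP; rewrite eq_complex /=.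
by apply/andP; split; apply/eqP; rewrite ?expr2; ring.
Qed.

Lemma frob2_ge0 (R : realType) m n (X : 'M[R[i]]_(m, n)) : 0 <= frob2 X.
Proof. by apply: sumr_ge0 => a _; apply: sumr_ge0 => b _; apply: sqmod_ge0. Qed.

Lemma frob2_eq0 (R : realType) m n (X : 'M[R[i]]_(m, n)) : frob2 X = 0 -> X = 0.
Proof.
move=> /eqP; rewrite /frob2 psumr_eq0; last first.
  by move=> a _; apply: sumr_ge0 => b _; apply: sqmod_ge0.
move=> /allP H; apply/matrixP => a b; rewrite mxE.
have /implyP := H a (mem_index_enum a) => /(_ isT).
rewrite psumr_eq0; last by move=> c _; apply: sqmod_ge0.
move=> /allP /(_ b (mem_index_enum b)) /implyP /(_ isT) /eqP.
exact: sqmod_eq0.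
Qed.

Lemma tr_frob (R : realType) m n (X : 'M[R[i]]_(m, n)) :
  \tr (X *m ctrmx X) = real_complex R (frob2 X).
Proof.
rewrite /mxtrace /frob2 rmorph_sum; apply: eq_bigr => a _.
rewrite mxE rmorph_sum; apply: eq_bigr => b _.
by rewrite mxE mul_conjc.
Qed.

Lemma ctrmxK (R : realType) m n (X : 'M[R[i]]_(m, n)) : ctrmx (ctrmx X) = X.
Proof. by apply/matrixP => a b; rewrite !mxE conjcK. Qed.

Lemma ctrmx_mul (R : realType) m n p (X : 'M[R[i]]_(m, n)) (Y : 'M[R[i]]_(n, p)) :
  ctrmx (X *m Y) = ctrmx Y *m ctrmx X.
Proof.
apply/matrixP => a b; rewrite !mxE rmorph_sum; apply: eq_bigr => c _.
by rewrite !mxE rmorphM mulrC.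
Qed.

Lemma ctrmxD (R : realType) m n (X Y : 'M[R[i]]_(m, n)) :
  ctrmx (X + Y) = ctrmx X + ctrmx Y.
Proof. by apply/matrixP => a b; rewrite !mxE rmorphD. Qed.

Lemma ctrmxN (R : realType) m n (X : 'M[R[i]]_(m, n)) :
  ctrmx (- X) = - ctrmx X.
Proof. by apply/matrixP => a b; rewrite !mxE rmorphN. Qed.

Lemma ctrmx0 (R : realType) m n : ctrmx (0 : 'M[R[i]]_(m, n)) = 0.
Proof. by apply/matrixP => a b; rewrite !mxE conjc0. Qed.

Lemma ctrmx1 (R : realType) n : ctrmx (1%:M : 'M[R[i]]_n) = 1%:M.
Proof. by apply/matrixP => a b; rewrite !mxE eq_sym conjc_nat. Qed.

Lemma ctrmx_sum (R : realType) m n (I : finType) (P : pred I) (F : I -> 'M[R[i]]_(m, n)) :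
  ctrmx (\sum_(i | P i) F i) = \sum_(i | P i) ctrmx (F i).
Proof.
apply/matrixP => a b; rewrite !mxE !summxE rmorph_sum; apply: eq_bigr => i _.
by rewrite mxE.
Qed.

Lemma frob2_ctr (R : realType) m n (X : 'M[R[i]]_(m, n)) : frob2 (ctrmx X) = frob2 X.
Proof.
rewrite /frob2 exchange_big; apply: eq_bigr => a _; apply: eq_bigr => b _.
by rewrite mxE; case: (X a b) => u v; rewrite /sqmod /= sqrrN.
Qed.

Lemma tr_pid (F : fieldType) n r : (r <= n)%N -> \tr (pid_mx r : 'M[F]_n) = r%:R.
Proof.
move=> rn; rewrite /mxtrace.
under eq_bigr do rewrite mxE eqxx /=.
rewrite -[in RHS](card_ord r) -sumr_const (big_ord_widen _ (fun _ => 1) rn) [RHS]big_mkcond /=.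
by apply: eq_bigr => i _; case: (i < r)%N.
Qed.

Lemma tr_idem (F : fieldType) n (P : 'M[F]_n) : P *m P = P -> \tr P = (\rank P)%:R.
Proof.
move=> PP.
set L := col_ebase P; set U := row_ebase P; set D := (pid_mx (\rank P) : 'M[F]_n).
have hP : P = L *m D *m U by rewrite mulmx_ebase.
have hL : L \in unitmx by apply: col_ebase_unit.
have hU : U \in unitmx by apply: row_ebase_unit.
have rn : (\rank P <= n)%N by apply: rank_leq_row.
have DD : D *m D = D by apply: pid_mx_id.
have key : D *m U *m L *m D = D.
  have e1 : L *m (D *m U *m L *m D) *m U = L *m D *m U.
    by rewrite !mulmxA -hP -!mulmxA [X in P *m X]mulmxA -hP PP.
  have := congr1 (fun M => invmx L *m M *m invmx U) e1.
  by rewrite /= !mulmxA !mulVmx // !mul1mx -!mulmxA !mulmxV // !mulmx1.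
rewrite {1}hP -mulmxA mxtrace_mulC -{1}DD -!mulmxA mxtrace_mulC.
by rewrite !mulmxA key tr_pid.
Qed.


Lemma keyl (R : realType) (d s : nat) (A B : 'I_d -> 'M[R[i]]_s) (x : 'I_d) :
  \sum_j A j *m ctrmx (A j) = 1%:M ->
  \sum_j B j *m ctrmx (B j) = 1%:M ->
  A x *m ctrmx (B x) = 0 ->
  frob2 (A x) + frob2 (B x) = s%:R ->
  exists r, (r <= s)%N /\ frob2 (A x) = r%:R.
Proof.
move=> hA hB hAB hf.
set X := A x; set Y := B x.
set SA := \sum_(j | j != x) A j *m ctrmx (A j).
set SB := \sum_(j | j != x) B j *m ctrmx (B j).
have eA : X *m ctrmx X = 1%:M - SA by rewrite -hA (bigD1 x) //= addrK.
have eB : Y *m ctrmx Y = 1%:M - SB by rewrite -hB (bigD1 x) //= addrK.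
have tS (Z : 'M[R[i]]_s) (W : 'I_d -> 'M[R[i]]_s) :
    \tr ((\sum_(j | j != x) W j *m ctrmx (W j)) *m (Z *m ctrmx Z)) =
    real_complex R (\sum_(j | j != x) frob2 (ctrmx Z *m W j)).
  rewrite mulmx_suml raddf_sum rmorph_sum; apply: eq_bigr => j _.
  transitivity (\tr ((ctrmx Z *m W j) *m ctrmx (ctrmx Z *m W j))); last exact: tr_frob.
  rewrite ctrmx_mul ctrmxK /= mulmxA mxtrace_mulC !mulmxA //.
have tPP (Z : 'M[R[i]]_s) (S : 'M[R[i]]_s) : Z *m ctrmx Z = 1%:M - S ->
    \tr ((ctrmx Z *m Z) *m (ctrmx Z *m Z)) = real_complex R (frob2 Z) - \tr (S *m (Z *m ctrmx Z)).
  move=> eZ.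
  have e : (ctrmx Z *m Z) *m (ctrmx Z *m Z) = ctrmx Z *m ((Z *m ctrmx Z) *m Z).
    by rewrite !mulmxA.
  rewrite e mxtrace_mulC [in LHS]eZ !mulmxBl mul1mx raddfB /= tr_frob mulmxA //.
have tK (Z : 'M[R[i]]_s) : \tr (ctrmx Z *m Z) = real_complex R (frob2 Z).
  by rewrite mxtrace_mulC tr_frob.
have PQ : (ctrmx X *m X) *m (ctrmx Y *m Y) = 0.
  by rewrite mulmxA -[ctrmx X *m X *m ctrmx Y]mulmxA hAB mulmx0 mul0mx.
have QP : (ctrmx Y *m Y) *m (ctrmx X *m X) = 0.
  have : Y *m ctrmx X = 0 by rewrite -[Y]ctrmxK -ctrmx_mul hAB ctrmx0.
  by move=> h; rewrite mulmxA -[ctrmx Y *m Y *m ctrmx X]mulmxA h mulmx0 mul0mx.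
set P := ctrmx X *m X; set Q := ctrmx Y *m Y.
set H := 1%:M - (P + Q).
have cH : ctrmx H = H.
  by rewrite /H ctrmxD ctrmxN ctrmx1 ctrmxD /P /Q !ctrmx_mul !ctrmxK.
have tH : real_complex R (frob2 H) = \tr (H *m H) by rewrite -tr_frob cH.
have hf' : real_complex R (frob2 X) + real_complex R (frob2 Y) = s%:R by rewrite -rmorphD hf rmorph_nat.
have E : real_complex R (frob2 H + \sum_(j | j != x) frob2 (ctrmx X *m A j)
                   + \sum_(j | j != x) frob2 (ctrmx Y *m B j)) = real_complex R 0.
  rewrite !rmorphD /= tH -tS -tS -/SA -/SB rmorph0.
  rewrite /H mulmxBl mul1mx mulmxBr mulmx1 mulmxDl !mulmxDr PQ QP.
  rewrite !raddfB !raddfD /= (tPP _ _ eA) (tPP _ _ eB) mxtrace1 !raddf0 /P /Q !tK -hf'.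
  ring.
have {E} E := complexI E.
have g1 := frob2_ge0 H.
have g2 : 0 <= \sum_(j | j != x) frob2 (ctrmx X *m A j).
  by apply: sumr_ge0 => j _; apply: frob2_ge0.
have g3 : 0 <= \sum_(j | j != x) frob2 (ctrmx Y *m B j).
  by apply: sumr_ge0 => j _; apply: frob2_ge0.
have z2 : \sum_(j | j != x) frob2 (ctrmx X *m A j) = 0 by lra.
have z3 : forall j, j != x -> ctrmx X *m A j = 0.
  move=> j jx; apply: frob2_eq0.
  move/eqP: z2; rewrite psumr_eq0; last by move=> i _; apply: frob2_ge0.
  by move=> /allP /(_ j (mem_index_enum j)) /implyP /(_ jx) /eqP.
have XS : ctrmx X *m SA = 0.
  rewrite /SA mulmx_sumr big1 // => j jx.
  by rewrite mulmxA z3 // mul0mx.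
have PP : P *m P = P.
  rewrite /P mulmxA -[ctrmx X *m X *m ctrmx X]mulmxA eA.
  by rewrite mulmxBr mulmx1 XS subr0.
exists (\rank P); split; first exact: rank_leq_row.
apply: complexI; rewrite rmorph_nat -tr_idem // /P tK //.
Qed.


Definition unidx d s (x : 'I_(d * s)) : 'I_d * 'I_s :=
  enum_val (cast_ord (esym (mxvec_cast d s)) x).

Lemma unidxK d s (i : 'I_d) (a : 'I_s) : unidx (mxvec_index i a) = (i, a).
Proof. by rewrite /unidx /mxvec_index cast_ordK enum_rankK. Qed.

Lemma idxK d s (x : 'I_(d * s)) : mxvec_index (unidx x).1 (unidx x).2 = x.
Proof. by case/mxvec_indexP: x => i a; rewrite unidxK. Qed.

Lemma mxvec_index_eq d s (i j : 'I_d) (a b : 'I_s) :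
  (mxvec_index i a == mxvec_index j b) = (i == j) && (a == b).
Proof.
have inj : injective (fun p : 'I_d * 'I_s => mxvec_index p.1 p.2).
  by apply: (can_inj (g := @unidx d s)) => [[u v]]; rewrite unidxK.
by rewrite (inj_eq inj (i, a) (j, b)) xpair_eqE.
Qed.

Lemma sum_idx (V : nmodType) d s (F : 'I_(d * s) -> V) :
  \sum_y F y = \sum_j \sum_b F (mxvec_index j b).
Proof.
have hb : bijective (fun p : 'I_d * 'I_s => mxvec_index p.1 p.2).
  exists (@unidx d s) => [[u v]|y]; first by rewrite unidxK.
  exact: idxK.
rewrite pair_big /= (reindex _ (onW_bij _ hb)) /=.
by apply: eq_bigr.
Qed.

Lemma blk_mul (R : realType) d s (U V : 'M[R[i]]_(d * s)) i k :
  blk (U *m V) i k = \sum_j blk U i j *m blk V j k.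
Proof.
apply/matrixP => a b; rewrite !mxE summxE sum_idx.
by apply: eq_bigr => j _; rewrite !mxE; apply: eq_bigr => c _; rewrite !mxE.
Qed.

Lemma blk_ctr (R : realType) d s (U : 'M[R[i]]_(d * s)) i j :
  blk (ctrmx U) i j = ctrmx (blk U j i).
Proof. by apply/matrixP => a b; rewrite !mxE. Qed.

Lemma blk1 (R : realType) d s (i k : 'I_d) :
  blk (1%:M : 'M[R[i]]_(d * s)) i k = (i == k)%:R *: 1%:M.
Proof.
apply/matrixP => a b; rewrite !mxE mxvec_index_eq.
by case: (i == k); case: (a == b); rewrite /= ?mulr1 ?mul1r ?mulr0 ?mul0r.
Qed.

Lemma blk_ext (R : realType) d s (U V : 'M[R[i]]_(d * s)) :
  (forall i j, blk U i j = blk V i j) -> U = V.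
Proof.
move=> h; apply/matrixP => x y.
case/mxvec_indexP: x => i a; case/mxvec_indexP: y => j b.
by have := congr1 (fun M : 'M_s => M a b) (h i j); rewrite !mxE.
Qed.

Lemma sumfrob (R : realType) d s (Z : 'I_d -> 'M[R[i]]_s) :
  \sum_j Z j *m ctrmx (Z j) = 1%:M -> \sum_j frob2 (Z j) = s%:R.
Proof.
move=> h; apply: complexI; rewrite rmorph_sum rmorph_nat -mxtrace1 -h raddf_sum.
by apply: eq_bigr => j _; first [exact: tr_frob | exact: (esym (tr_frob _))].
Qed.

Lemma Uset_Lset (R : realType) d s (M : 'M[R]_d) :
  (1 <= s)%N -> Uset s M -> Lset s M.
Proof.
move=> s1 [U [[hU1 hU2] <-]].
have s0 : (s%:R : R) != 0 by rewrite pnatr_eq0 -lt0n.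
have rowsum (i k : 'I_d) :
    \sum_j blk U i j *m ctrmx (blk U k j) = (i == k)%:R *: 1%:M.
  by rewrite -blk1 -hU1 blk_mul; apply: eq_bigr => j _; rewrite blk_ctr.
have colsum (j l : 'I_d) :
    \sum_i ctrmx (blk U i j) *m blk U i l = (j == l)%:R *: 1%:M.
  by rewrite -blk1 -hU2 blk_mul; apply: eq_bigr => i _; rewrite blk_ctr.
have r1 (i : 'I_d) : \sum_j blk U i j *m ctrmx (blk U i j) = 1%:M.
  by rewrite rowsum eqxx scale1r.
have c1 (j : 'I_d) : \sum_i ctrmx (blk U i j) *m ctrmx (ctrmx (blk U i j)) = 1%:M.
  by under eq_bigr do rewrite ctrmxK; rewrite colsum eqxx scale1r.
have ge (i j : 'I_d) : 0 <= phi U i j.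
  by rewrite mxE mulr_ge0 ?invr_ge0 ?ler0n ?frob2_ge0.
have rs (i : 'I_d) : \sum_j phi U i j = 1.
  under eq_bigr do rewrite mxE.
  by rewrite -mulr_sumr (sumfrob (r1 i)) mulVf.
have cs (j : 'I_d) : \sum_i phi U i j = 1.
  under eq_bigr do rewrite mxE -frob2_ctr.
  by rewrite -mulr_sumr (sumfrob (c1 j)) mulVf.
split; first by split=> //.
split.
- move=> i k ik; split; first by split.
  split; first by split.
  exists (fun j => blk U i j), (fun j => blk U k j).
  split; first exact: r1.
  split; first exact: r1.
  split; first by rewrite rowsum (negPf ik) scale0r.
  by split=> j; rewrite mxE.
- move=> j l jl; split; first by split.
  split; first by split.
  exists (fun i => ctrmx (blk U i j)), (fun i => ctrmx (blk U i l)).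
  split; first exact: c1.
  split; first exact: c1.
  split.
    by under eq_bigr do rewrite ctrmxK; rewrite colsum (negPf jl) scale0r.
  by split=> i; rewrite mxE frob2_ctr.
Qed.


Definition Gm (R : realType) d s k (pi sigma : 'S_d) (i j : 'I_d) : 'M[R[i]]_s :=
  (pi i == j)%:R *: copid_mx k + (sigma i == j)%:R *: pid_mx k.

Definition Um (R : realType) d s k (pi sigma : 'S_d) : 'M[R[i]]_(d * s) :=
  \matrix_(x, y) Gm R s k pi sigma (unidx x).1 (unidx y).1 (unidx x).2 (unidx y).2.

Lemma blkU (R : realType) d s k (pi sigma : 'S_d) i j :
  blk (Um R s k pi sigma) i j = Gm R s k pi sigma i j.
Proof. by apply/matrixP => a b; rewrite !mxE !unidxK. Qed.

Lemma ctrG (R : realType) d s k (pi sigma : 'S_d) i j :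
  ctrmx (Gm R s k pi sigma i j) = Gm R s k pi sigma i j.
Proof.
apply/matrixP => a b; rewrite !mxE !(rmorphD, rmorphM, rmorphB, conjc_nat).
rewrite !(rmorphN, rmorph_nat).
case: (eqVneq (a : nat) b) => [/val_inj -> //| ab].
have ba : (b == a :> nat) = false by rewrite eq_sym (negPf ab).
have ab' : (a == b) = false by apply/negP => /eqP abe; rewrite abe eqxx in ab.
have ba' : (b == a) = false by apply/negP => /eqP abe; rewrite abe eqxx in ab.
by rewrite ?ba ?ab' ?ba' ?(negPf ab).
Qed.

Lemma GG (R : realType) d s k (pi sigma : 'S_d) i i' j : (k <= s)%N ->
  Gm R s k pi sigma i j *m Gm R s k pi sigma i' j =
  ((pi i == j) && (pi i' == j))%:R *: copid_mx k +
  ((sigma i == j) && (sigma i' == j))%:R *: pid_mx k.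
Proof.
move=> ks; rewrite /Gm mulmxDl !mulmxDr -!scalemxAl -!scalemxAr !scalerA.
rewrite copid_mx_id // mul_copid_mx_pid // mul_pid_mx_copid // pid_mx_id //.
by rewrite !scaler0 addr0 add0r -!natrM !mulnb.
Qed.

Lemma sum_perm_eq (V : pzRingType) d (p : 'S_d) (i i' : 'I_d) :
  \sum_j (((p i == j) && (p i' == j))%:R : V) = (i == i')%:R.
Proof.
rewrite (bigD1 (p i)) //= eqxx /= big1 ?addr0.
  by rewrite (inj_eq (@perm_inj _ p)) eq_sym.
move=> j hj; by rewrite eq_sym (negPf hj).
Qed.

Lemma Um_unitary (R : realType) d s k (pi sigma : 'S_d) : (k <= s)%N ->
  unitary (Um R s k pi sigma).
Proof.
move=> ks.
have h : Um R s k pi sigma *m ctrmx (Um R s k pi sigma) = 1%:M.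
  apply: blk_ext => i i'; rewrite blk_mul blk1.
  under eq_bigr do rewrite blk_ctr !blkU ctrG GG //.
  rewrite big_split /= -!scaler_suml !sum_perm_eq -scalerDr.
  by rewrite /copid_mx subrK.
by split=> //; apply: mulmx1C.
Qed.

Lemma frobG (R : realType) d s k (pi sigma : 'S_d) i j : (k <= s)%N ->
  frob2 (Gm R s k pi sigma i j) =
  (pi i == j)%:R * (s%:R - k%:R) + (sigma i == j)%:R * k%:R.
Proof.
move=> ks; apply: complexI.
transitivity (\tr (Gm R s k pi sigma i j *m ctrmx (Gm R s k pi sigma i j))).
  by apply/esym/tr_frob.
rewrite ctrG GG // !andbb raddfD /= !mxtraceZ /copid_mx raddfB /= mxtrace1 tr_pid //.
by rewrite !(rmorphD, rmorphM, rmorphB, rmorphN, rmorph_nat).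
Qed.

Lemma constr (R : realType) d s k (pi sigma : 'S_d) : (1 <= s)%N -> (k <= s)%N ->
  Uset s ((1 - (k%:R / s%:R)) *: perm_mx pi + (k%:R / s%:R) *: perm_mx sigma
           : 'M[R]_d).
Proof.
move=> s1 ks.
have s0 : (s%:R : R) != 0 by rewrite pnatr_eq0 -lt0n.
exists (Um R s k pi sigma); split; first exact: Um_unitary.
apply/matrixP => i j; rewrite !mxE blkU frobG //.
by field.
Qed.


Lemma porbit3 (T : finType) (t : {perm T}) x :
  (3 <= #|porbit t x|)%N -> t x != x /\ t (t x) != x.
Proof.
move=> hx; have := uniq_traject_porbit t x; move: hx.
case: #|porbit t x| => [|[|[|n]]] // _.
rewrite /= !in_cons => /andP [h _].
move: h; rewrite !negb_or => /andP [h1 /andP [h2 _]].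
by split; rewrite eq_sym.
Qed.

Lemma Lset_k (R : realType) d s (pi sigma : 'S_d) (lambda : R) :
  (1 <= s)%N -> (exists i, (3 <= #|porbit (pi^-1 * sigma)%g i|)%N) ->
  Lset s ((1 - lambda) *: perm_mx pi + lambda *: perm_mx sigma) ->
  exists k : nat, (k <= s)%N /\ lambda = k%:R / s%:R.
Proof.
move=> s1 [x hx] [_ [hrow _]].
have s0 : (s%:R : R) != 0 by rewrite pnatr_eq0 -lt0n.
set t := (pi^-1 * sigma)%g in hx.
have [tx ttx] := porbit3 hx.
have tE y : t y = sigma (pi^-1 y)%g by rewrite permM.
set r1 := (sigma^-1 x)%g; set r2 := (pi^-1 x)%g.
have sr1 : sigma r1 = x by rewrite permKV.
have pr2 : pi r2 = x by rewrite permKV.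
have r12 : r1 != r2.
  by apply/eqP => e; move: tx; rewrite tE -/r2 -e sr1 eqxx.
have pr1 : pi r1 != x.
  by apply/eqP => e; move: r12; rewrite -pr2 in e; rewrite (perm_inj e) eqxx.
have sr2 : sigma r2 != x.
  by apply/eqP => e; move: r12; rewrite -sr1 in e; rewrite (perm_inj e) eqxx.
have key : pi r1 != sigma r2.
  apply/eqP => e; have e1 : t x = pi r1 by rewrite tE -/r2 -e.
  by move: ttx; rewrite e1 tE permK sr1 eqxx.
have [_ [_ [A [B [hA [hB [hAB [fa fb]]]]]]]] := hrow r1 r2 r12.
have ent r j : ((1 - lambda) *: perm_mx pi + lambda *: perm_mx sigma : 'M[R]_d) r j
    = (1 - lambda) * (pi r == j)%:R + lambda * (sigma r == j)%:R.
  by rewrite !mxE.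
have fz (Z : 'M[R[i]]_s) : s%:R^-1 * frob2 Z = 0 -> Z = 0.
  by move=> /eqP; rewrite mulf_eq0 invr_eq0 (negPf s0) /= => /eqP /frob2_eq0.
have zero j : j != x -> A j *m ctrmx (B j) = 0.
  move=> jx; case: (eqVneq (pi r1) j) => [e|ne].
    have -> : B j = 0.
      have xj : (x == j) = false by rewrite eq_sym (negPf jx).
      have sj : (sigma r2 == j) = false by rewrite -e eq_sym (negPf key).
      by apply: fz; rewrite fb ent pr2 xj sj !mulr0 addr0.
    by rewrite ctrmx0 mulmx0.
  have -> : A j = 0.
    apply: fz; rewrite fa ent sr1 (negPf ne).
    by rewrite eq_sym (negPf jx) !mulr0 addr0.
  by rewrite mul0mx.
have hAB' : A x *m ctrmx (B x) = 0.
  move: hAB; rewrite (bigD1 x) //= big1 ?addr0 // => j jx; exact: zero.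
have fA : frob2 (A x) = s%:R * lambda.
  have := fa x; rewrite ent sr1 eqxx (negPf pr1) mulr0 add0r mulr1 => <-.
  by rewrite mulrA mulfV // mul1r.
have fB : frob2 (B x) = s%:R * (1 - lambda).
  have := fb x; rewrite ent pr2 eqxx (negPf sr2) mulr0 addr0 mulr1 => <-.
  by rewrite mulrA mulfV // mul1r.
have hf : frob2 (A x) + frob2 (B x) = s%:R by rewrite fA fB; ring.
have [r [rs hr]] := keyl hA hB hAB' hf.
exists r; split=> //.
by rewrite -hr fA; field.
Qed.

Unset Implicit Arguments.

Theorem proposition3p13 (R : realType) (d s : nat) (pi sigma : 'S_d) :
  (3 <= d)%N -> (1 <= s)%N ->
  (exists (i : 'I_d), (3 <= #|porbit (pi^-1 * sigma)%g i|)%N) ->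
  forall lambda : R, 0 <= lambda <= 1 ->
    let M := (1 - lambda) *: perm_mx pi + lambda *: perm_mx sigma in
    (Uset s M <-> Lset s M) /\
    (Lset s M <-> exists k : nat, (k <= s)%N /\ lambda = k%:R / s%:R).
Proof.
move=> _ s1 hx lambda _ M.
have UL : Uset s M -> Lset s M by apply: Uset_Lset.
have LK : Lset s M -> exists k : nat, (k <= s)%N /\ lambda = k%:R / s%:R.
  by apply: Lset_k.
have KU : (exists k : nat, (k <= s)%N /\ lambda = k%:R / s%:R) -> Uset s M.
  by move=> [k [ks e]]; rewrite /M e; apply: constr.
by split; split=> h; auto.
Qed.
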